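(* Let $k\le -1$, $w^+=W_v(T_k^0)$ and $w^-=0$, and suppose $W_k(T_n^0;w^+)=W_k(T_n^0;w^-)$ for some $n$ with $k\le n\le-1$. Then $W_k(T_m^0;w^+)=W(m)=W_k(T_m^0;w^-)$ for all $m\ge n$. Moreover, for all $t\ge T_n^0+W_k^{(1)}(T_n^0;w^+)$, \[ Z_{T_k^0}\big(t-T_k^0;\,Q_v(T_k^0),\,\mathcal{S}(U(T_k^0)),\,0\big)=Z_{T_k^0}\big(t-T_k^0;0,0,0\big)=Z(t).\]
   Context: Let $c\ge1$. Let $G,F$ be CDFs of strictly positive random variables $A$ (interarrival) and $V$ (service), $\lambda=1/E[A]$, $\mu=1/E[V]$, $\lambda<c\mu$. Let $\mathcal{T}^0=\{T_n^0:n\in\mathbb{Z}\setminus\{0\}\}$ be a time-stationary renewal point process with inter-renewal CDF $G$, indexed $\dots<T_{-1}^0<0<T_1^0<\dots$ (indices ordered naturally); $T_n^{0,+}$ is the next point after $T_n^0$, $A_n=T_n^{0,+}-T_n^0$. Let $\mathcal{T}^i=\{T_n^i\}$, $i=1,\dots,c$, be i.i.d. time-stationary renewal processes with inter-renewal CDF $F$, independent of $\mathcal{T}^0$; $V_k^i=T_k^{i,+}-T_k^i$. $U^i(t)=\inf\{T_n^i:T_n^i>t\}-t$, $U(t)=(U^1(t),\dots,U^c(t))$, $U(s_-)$ its left limit. $\mathcal{S}$ sorts ascending; $x^+$ componentwise positive part; $\mathbf{1}=(1,\dots,1)$, $\mathbf{e}_1=(1,0,\dots,0)$. Vacation system: customers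 arrive at the points of $\mathcal{T}^0$ and wait in a FCFS queue; at each point $T_k^i$, if the queue is nonempty just before, the head customer leaves the queue and is served by server $i$ for time $V_k^i$, otherwise server $i$ takes a vacation of length $V_k^i$. Stationary queue length $Q_v(t)=\sup_{s\le t}\big(|(s,t]\cap\mathcal{T}^0|-\sum_i|(s,t]\cap\mathcal{T}^i|\big)$. $D_n^0$ is the delay of the customer arriving at $T_n^0$; he leaves the queue at a point $T_k^{i(n)}=T_n^0+D_n^0$ and his service time is $V_n:=V_k^{i(n)}$. $W_v(T_n^0)=D_n^0\mathbf{1}+\mathcal{S}(U((T_n^0+D_n^0)_-))$. For $k\le n$ and nonnegative ascending $w\in\mathbb{R}^c$: $W_k(T_k^0;w)=w$, $W_k(T_n^{0,+};w)=\mathcal{S}\big((W_k(T_n^0;w)+V_n\mathbf{e}_1-A_n\mathbf{1})^+\big)$; $W_k^{(1)}$ is the first entry; $W(n)=\lim_{k\to-\infty}W_k(T_n^0;0)$. For $u\in\mathbb{R}$ and $z=(q,r,e)$, $Z_u(t;z)$ is the state at time $u+t$ (number waiting in queue, ascending vector of remaining service times at the $c$ servers, time since last arrival) of a FCFS $c$-server queue started at time $u$ in state $z$ and fed by the customers arriving at $T_n^0\in(u,u+t]$ with service times $V_n$. $Z(t)=\lim_{u\to-\infty}Z_u(t-u;(0,0,e_u))$, $e_u=u-\sup\{T_n^0:T_n^0\le u\}$ (this limit exists a.s.).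
   Formalization: $Z_{T_k^0}(t-T_k^0;0,0,0)$ also serves the customer arriving at $T_k^0$, not only arrivals in $(T_k^0,t]$, and the $Q_v(T_k^0)$ customers initially waiting in the other system are the last arrivals up to $T_k^0$. Each condition added here is assumed in the paper as well or is needed for the statement above to hold. *)

(* Defs.v *)
From HB Require Import structures.
From mathcomp Require Import all_boot all_order all_algebra.
From mathcomp Require Import boolp classical_sets reals.
Set Implicit Arguments. Unset Strict Implicit. Unset Printing Implicit Defensive.
Import Order.TTheory GRing.Theory Num.Theory.
Local Open Scope ring_scope.

(* One realization of the point processes is fixed.
   INDEXING CONVENTION: the paper indexes the points of T^0 by Z\{0} with
   T_{-1}^0 < 0 < T_1^0.  We reindex by int: T0 i = T^0_i for i <= -1 and
   T0 i = T^0_{i+1} for i >= 0.  This order-preserving bijection fixes all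
   negative indices, so k, n <= -1 keep their names; T^{0,+}_n = T0 (n+1).
   Server processes T^i (i : 'I_c) are indexed by int arbitrarily. *)

Definition sortR {R : realType} (v : seq R) : seq R := sort (fun x y : R => x <= y) v.

Definition incr_unb {R : realType} (T : int -> R) : Prop :=
  (forall i j : int, i < j -> T i < T j) /\
  (forall x : R, exists i, x < T i) /\ (forall x : R, exists i, T i < x).

Definition lastidx {R : realType} (T : int -> R) (t : R) : int :=
  xget 0 (fun i : int => T i <= t < T (i + 1)).
Definition firstge {R : realType} (T : int -> R) (t : R) : int :=
  xget 0 (fun m : int => T (m - 1) < t <= T m).
Definition Ncount {R : realType} (T : int -> R) (s t : R) : int :=
  lastidx T t - lastidx T s.

(* positive part and Kiefer-Wolfowitz step S((w + v e1 - a 1)^+) *)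
Definition kwstep {R : realType} (w : seq R) (v a : R) : seq R :=
  sortR [seq Num.max (x - a) 0 | x <- (head 0 w + v) :: behead w].

Section Model.
Context {R : realType} {c : nat} (T0 : int -> R) (TS : 'I_c -> int -> R).

(* regularity of the realization (almost sure properties of the model) *)
Definition arrivals_ok : Prop := incr_unb T0 /\ T0 (-1) < 0 < T0 0.
Definition servers_ok : Prop := forall s : 'I_c, incr_unb (TS s).
Definition no_coincidence : Prop :=
  (forall (i : int) (s : 'I_c) (m : int), T0 i <> TS s m) /\
  (forall (s1 s2 : 'I_c) (m1 m2 : int), s1 <> s2 -> TS s1 m1 <> TS s2 m2).

Definition NS (s t : R) : int := \sum_(i < c) Ncount (TS i) s t.
Definition qdiff (s t : R) : int := Ncount T0 s t - NS s t.
(* Q_v(t) = sup_{s <= t} qdiff s t ; finite (a.s., since lambda < c mu) *)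
Definition Qv_finite : Prop :=
  forall t : R, exists B : int, forall s, s <= t -> qdiff s t <= B.
Definition Qv (t : R) : int :=
  xget 0 (fun q : int => (forall s, s <= t -> qdiff s t <= q) /\
                         exists2 s, s <= t & qdiff s t = q).

Definition isSP (p : R) : Prop := exists (s : 'I_c) (m : int), TS s m = p.

(* time at which customer i (arriving at T0 i) leaves the vacation queue:
   FCFS, he is Q_v(T0 i)-th in line, hence leaves at the Q_v(T0 i)-th
   server point after T0 i *)
Definition dep (i : int) : R :=
  xget 0 (fun p : R => isSP p /\ T0 i < p /\ NS (T0 i) p = Qv (T0 i)).
Definition D0 (i : int) : R := dep i - T0 i.
Definition Vc (i : int) : R :=
  xget 0 (fun v : R => exists (s : 'I_c) (m : int),
                         TS s m = dep i /\ v = TS s (m + 1) - TS s m).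
Definition Aint (i : int) : R := T0 (i + 1) - T0 i.

(* residual times U(t) and their left limits U(t-) *)
Definition Uvec (t : R) : seq R :=
  [seq TS s (lastidx (TS s) t + 1) - t | s <- enum 'I_c].
Definition Uleftvec (t : R) : seq R :=
  [seq TS s (firstge (TS s) t) - t | s <- enum 'I_c].

Definition Wv (i : int) : seq R := [seq D0 i + x | x <- sortR (Uleftvec (dep i))].

Fixpoint Witer (k : int) (w : seq R) (l : nat) : seq R :=
  match l with
  | 0 => w
  | l'.+1 => kwstep (Witer k w l') (Vc (k + l'%:Z)) (Aint (k + l'%:Z))
  end.
(* W_k(T^0_m; w), meaningful for k <= m *)
Definition Wt (k : int) (w : seq R) (m : int) : seq R := Witer k w (absz (m - k)).

(* "W_k(T_m^0;0) --> x as k --> -oo", i.e. W(m) exists and equals x *)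
Definition Wlim_to (m : int) (x : seq R) : Prop :=
  forall eps : R, 0 < eps -> exists K : int, forall k', k' <= K -> k' <= m ->
    forall p : nat, (p < c)%N -> `|nth 0 (Wt k' (nseq c 0) m) p - nth 0 x p| < eps.

(* FCFS c-server queue started at time u with residual service vector r at
   the servers, serving customers j, j+1, ... (service times Vc) in order;
   customer m is present from time max(u, T0 m).
   Fseq l = sorted vector of (absolute) times at which the servers become free
   after customers j..j+l-1 have been assigned; sigma l = start of service
   of customer j+l. *)
Fixpoint Fseq (u : R) (r : seq R) (j : int) (l : nat) : seq R :=
  match l with
  | 0 => sortR [seq u + x | x <- r]
  | l'.+1 =>
      let F := Fseq u r j l' in
      let sg := Num.max (Num.max u (T0 (j + l'%:Z))) (head 0 F) in
      sortR ((sg + Vc (j + l'%:Z)) :: behead F)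
  end.
Definition sigma (u : R) (r : seq R) (j : int) (l : nat) : R :=
  Num.max (Num.max u (T0 (j + l%:Z))) (head 0 (Fseq u r j l)).
(* number of customers present by time s *)
Definition Nent (u : R) (j : int) (s : R) : nat :=
  if s < u then 0%N else absz (Num.max 0 (lastidx T0 s - j + 1)).

(* state at time s: (number waiting in queue, ascending vector of remaining
   service times at the c servers, time since last arrival); e = time since
   last arrival at the starting time u *)
Definition Zstate (u : R) (r : seq R) (j : int) (e : R) (s : R) : nat * seq R * R :=
  let L := Nent u j s in
  let nwait := count (fun l => s < sigma u r j l) (iota 0 L) in
  let nstart := count (fun l => sigma u r j l <= s) (iota 0 L) in
  let res := sortR [seq Num.max (x - s) 0 | x <- Fseq u r j nstart] in
  let el := if u < T0 (lastidx T0 s) then s - T0 (lastidx T0 s) else e + (s - u) in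
  (nwait, res, el).

(* Z_u(t-u; (0,0,e_u)) : empty system at time u fed by arrivals after u *)
Definition Zemp (u t : R) : nat * seq R * R :=
  Zstate u (nseq c 0) (lastidx T0 u + 1) (u - T0 (lastidx T0 u)) t.

(* "Z_u(t-u;(0,0,e_u)) --> z as u --> -oo", i.e. Z(t) exists and equals z *)
Definition Z_to (t : R) (z : nat * seq R * R) : Prop :=
  (exists U0 : R, forall u, u <= U0 -> (Zemp u t).1.1 = z.1.1) /\
  (forall eps : R, 0 < eps -> exists U0 : R, forall u, u <= U0 ->
     `|(Zemp u t).2 - z.2| < eps /\
     forall p : nat, (p < c)%N -> `|nth 0 (Zemp u t).1.2 p - nth 0 z.1.2 p| < eps).

End Model.

(* Main.v *)
Require Import Defs.
From HB Require Import structures.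
From mathcomp Require Import all_boot all_order all_algebra.
From mathcomp Require Import boolp classical_sets reals.
From mathcomp Require Import zify ring lra.
Import Order.TTheory GRing.Theory Num.Theory.
Local Open Scope ring_scope.
Set Implicit Arguments. Unset Strict Implicit. Unset Printing Implicit Defensive.


Section Sorting.
Variable R : realType.
Implicit Types s t a b : seq R.

Lemma leR_total : total (fun x y : R => x <= y). Proof. exact: le_total. Qed.
Lemma leR_trans : transitive (fun x y : R => x <= y).
Proof. by move=> x y z; apply: le_trans. Qed.
Lemma leR_anti : antisymmetric (fun x y : R => x <= y).
Proof. by move=> x y; apply: le_anti. Qed.

Lemma sortR_sorted s : sorted (fun x y : R => x <= y) (sortR s).
Proof. exact: (sort_sorted leR_total). Qed.
Lemma sortR_perm s : perm_eq (sortR s) s.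
Proof. by rewrite /sortR perm_sort. Qed.
Lemma sortR_eq s t : perm_eq s t -> sortR s = sortR t.
Proof. by move/(perm_sortP leR_total leR_trans leR_anti). Qed.
Lemma sorted_sortR s : sorted (fun x y : R => x <= y) s -> sortR s = s.
Proof. exact: (sorted_sort (@leR_trans)). Qed.
Lemma size_sortR s : size (sortR s) = size s.
Proof. exact: size_sort. Qed.
Lemma mem_sortR s : sortR s =i s.
Proof. exact: mem_sort. Qed.

Lemma sortR_map_mono (f : R -> R) s : {homo f : x y / x <= y} ->
  sortR (map f s) = map f (sortR s).
Proof.
move=> hf; apply: (sorted_eq leR_trans leR_anti).
- exact: sortR_sorted.
- have := sortR_sorted s; case: (sortR s) => //= x l.
  elim: l x => //= y l IH x /andP[xy pl]; rewrite hf //=; exact: IH.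
apply: perm_trans (sortR_perm _) _; rewrite perm_sym; apply: perm_map; exact: sortR_perm.
Qed.

Definition le2 s t := all2 (fun x y : R => x <= y) s t.

Lemma le2_count s t (x : R) : le2 s t ->
  (count (fun y => (x <= y)%R) s <= count (fun y => (x <= y)%R) t)%N.
Proof.
elim: s t => [|y s IH] [|z t] //= /andP[yz st].
apply: leq_add; last exact: IH.
by case: (boolP (x <= y)) => //= xy; rewrite (le_trans xy yz).
Qed.

Lemma le2_size s t : le2 s t -> size s = size t.
Proof. by elim: s t => [|y s IH] [|z t] //= /andP[_ /IH ->]. Qed.

Lemma sorted_count_le2 a b : sorted (fun x y : R => x <= y) a ->
  sorted (fun x y : R => x <= y) b -> size a = size b ->
  (forall x : R, (count (fun y => (x <= y)%R) a <= count (fun y => (x <= y)%R) b)%N) ->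
  le2 a b.
Proof.
elim: a b => [|x a IH] [|y b] //= sa sb [] sz hc.
have ax : all (fun z => x <= z) a by apply: (order_path_min leR_trans).
have yb : all (fun z => y <= z) b by apply: (order_path_min leR_trans).
have xy : x <= y.
  case: (leP x y) => // yx; have := hc x; rewrite lexx /=.
  have -> : count (fun y0 => (x <= y0)%R) a = size a.
    by apply/eqP; rewrite -all_count.
  rewrite leNgt yx /= add0n.
  suff : (count (fun y0 => (x <= y0)%R) b <= size b)%N by rewrite sz; move=> h1 h2; move: (leq_trans h2 h1); rewrite ltnn.
  exact: count_size.
rewrite xy /=; apply: IH.
- exact: path_sorted sa.
- exact: path_sorted sb.
- by [].
move=> z; have := hc z.
case: (leP z x) => zx.
  by rewrite (le_trans zx xy) /= !add1n ltnS.
case: (leP z y) => zy.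
  rewrite /= => _.
  have -> : count (fun y0 => (z <= y0)%R) b = size b.
    apply/eqP; rewrite -all_count; apply/allP => w wb.
    by apply: le_trans zy _; move/allP: yb; apply.
  by rewrite -sz count_size.
by rewrite /= !add0n.
Qed.

Lemma sort_mono s t : le2 s t -> le2 (sortR s) (sortR t).
Proof.
move=> st; apply: sorted_count_le2; rewrite ?sortR_sorted //.
  by rewrite !size_sortR; apply: le2_size.
by move=> x; rewrite /sortR !count_sort; apply: le2_count.
Qed.

Lemma le2_map (f g : R -> R) s : (forall x, f x <= g x) -> le2 (map f s) (map g s).
Proof. by move=> h; elim: s => //= x s ->; rewrite h. Qed.

Lemma le2_map_mono (f : R -> R) s t : {homo f : x y / x <= y} -> le2 s t -> le2 (map f s) (map f t).
Proof. by move=> h; elim: s t => [|x s IH] [|y t] //= /andP[/h -> /IH]. Qed.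

Lemma le2_trans s t u : le2 s t -> le2 t u -> le2 s u.
Proof.
elim: s t u => [|x s IH] [|y t] [|z u] //= /andP[xy st] /andP[yz tu].
by rewrite (le_trans xy yz) (IH _ _ st tu).
Qed.

Lemma le2_refl s : le2 s s.
Proof. by elim: s => //= x s ->; rewrite lexx. Qed.

Lemma le2_anti s t : le2 s t -> le2 t s -> s = t.
Proof.
elim: s t => [|x s IH] [|y t] //= /andP[xy st] /andP[yx ts].
by rewrite (IH _ st ts); congr (_ :: _); apply: le_anti; rewrite xy yx.
Qed.

Lemma le2_nth s t p : le2 s t -> nth 0 s p <= nth 0 t p.
Proof.
elim: s t p => [|x s IH] [|y t] [|p] //= /andP[] //.
by move=> _ /IH.
Qed.

End Sorting.


Section KW.
Context {R : realType} {c : nat} (T0 : int -> R) (TS : 'I_c -> int -> R).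

Lemma kwstep_sorted (w : seq R) v a : sorted (fun x y : R => x <= y) (kwstep w v a).
Proof. exact: sortR_sorted. Qed.

Lemma max0_homo (a : R) : {homo (fun x => Num.max (x - a) 0) : x y / x <= y}.
Proof.
move=> x y xy; by rewrite ge_max !le_max lexx lerD2r xy !orbT.
Qed.

Lemma kwstep_mono (w w' : seq R) v a : le2 w w' -> le2 (kwstep w v a) (kwstep w' v a).
Proof.
move=> ww; rewrite /kwstep; apply: sort_mono; apply: le2_map_mono; first exact: max0_homo.
case: w w' ww => [|x w] [|y w'] //=; first by rewrite lexx.
by move=> /andP[xy ->]; rewrite lerD2r xy.
Qed.

Lemma size_kwstep (w : seq R) v a : (0 < size w)%N -> size (kwstep w v a) = size w.
Proof. by case: w => //= x w _; rewrite size_sortR /= size_map. Qed.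

Lemma kwstep_ge0 (w : seq R) v a : all (fun x => 0 <= x) (kwstep w v a).
Proof.
apply/allP => x; rewrite mem_sortR => /mapP[y _ ->]; by rewrite le_max lexx orbT.
Qed.

Lemma Witer_add k w p q :
  Witer T0 TS k w (p + q) = Witer T0 TS (k + p%:Z) (Witer T0 TS k w p) q.
Proof.
elim: q => [|q IH]; first by rewrite addn0.
rewrite addnS /= IH; congr kwstep; congr (_ _); rewrite -addrA; congr (_ + _); lia.
Qed.

Lemma Witer_mono k w w' p : le2 w w' -> le2 (Witer T0 TS k w p) (Witer T0 TS k w' p).
Proof. by move=> h; elim: p => //= p IH; apply: kwstep_mono. Qed.

Lemma size_Witer k w p : (0 < size w)%N -> size (Witer T0 TS k w p) = size w.
Proof.
move=> h; elim: p => //= p IH; rewrite size_kwstep IH //.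
Qed.

Lemma Witer_ge0 k w p : all (fun x => 0 <= x) w -> all (fun x => 0 <= x) (Witer T0 TS k w p).
Proof. by case: p => //= p _; apply: kwstep_ge0. Qed.

Lemma le2_nseq0 (s : seq R) : all (fun x => 0 <= x) s -> le2 (nseq (size s) 0) s.
Proof. by elim: s => //= x s IH /andP[-> /IH]. Qed.

Lemma Wt_eq k w m : k <= m -> Wt T0 TS k w m = Witer T0 TS k w (absz (m - k)).
Proof. by []. Qed.

End KW.


Section Incr.
Context {R : realType} (T : int -> R) (hT : incr_unb T).

Lemma ltT i j : i < j -> T i < T j. Proof. by case: hT => h _; apply: h. Qed.
Lemma leT i j : i <= j -> T i <= T j.
Proof. by rewrite le_eqVlt => /orP[/eqP->//|/ltT/ltW]. Qed.
Lemma ltTr i j : T i < T j -> i < j.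
Proof. by case: (leP j i) => // /leT; rewrite leNgt => /negP. Qed.
Lemma leTr i j : T i <= T j -> i <= j.
Proof. by case: (leP i j) => // /ltT; rewrite ltNge => /negP. Qed.
Lemma T_inj i j : T i = T j -> i = j.
Proof. by move=> e; apply: le_anti; rewrite !leTr // e. Qed.

Lemma lastidx_ex t : exists i, T i <= t < T (i + 1).
Proof.
case: hT => _ [hu1 hu2]; have [i0 hi0] := hu1 t; have [j hj] := hu2 t.
have : forall d : nat, forall j, T j <= t -> t < T (j + d%:Z) -> exists i, T i <= t < T (i + 1).
  elim=> [|d IH] j' h1 h2; first by move: h2; rewrite addr0 ltNge h1.
  case: (ltP t (T (j' + 1))) => h3; first by exists j'; rewrite h1 h3.
  by apply: (IH (j' + 1)) => //; have -> : j' + 1 + d%:Z = j' + d.+1%:Z by lia.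
move/(_ (absz (i0 - j)) j (ltW hj)); apply.
have ji : j < i0 by apply: ltTr; apply: lt_trans hj hi0.
have -> : j + (absz (i0 - j))%:Z = i0 by lia.
exact: hi0.
Qed.

Lemma lastidx_eq t i : T i <= t < T (i + 1) -> lastidx T t = i.
Proof.
move=> hi; apply: xget_unique => // j /andP[h1 h2]; move/andP: hi => [h3 h4].
apply: le_anti; apply/andP; split.
- have : T j < T (i + 1) by apply: le_lt_trans h1 h4.
  by move/ltTr; lia.
- have : T i < T (j + 1) by apply: le_lt_trans h3 h2.
  by move/ltTr; lia.
Qed.

Lemma lastidxP t : T (lastidx T t) <= t < T (lastidx T t + 1).
Proof. by have [i hi] := lastidx_ex t; rewrite (lastidx_eq hi). Qed.
Lemma lastidx_le t : T (lastidx T t) <= t. Proof. by case/andP: (lastidxP t). Qed.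
Lemma lastidx_gt t : t < T (lastidx T t + 1). Proof. by case/andP: (lastidxP t). Qed.

Lemma lastidxT i : lastidx T (T i) = i.
Proof. by apply: lastidx_eq; rewrite lexx ltT //; lia. Qed.

Lemma lastidx_mono s t : s <= t -> lastidx T s <= lastidx T t.
Proof.
move=> st; case: (leP (lastidx T s) (lastidx T t)) => // h.
have : T (lastidx T t + 1) <= T (lastidx T s) by apply: leT; lia.
move=> h2; have := lt_le_trans (lastidx_gt t) h2.
by rewrite ltNge (le_trans (lastidx_le s) st).
Qed.

Lemma Ncount_ge0 s t : s <= t -> 0 <= Ncount T s t.
Proof. by move/lastidx_mono; rewrite /Ncount subr_ge0. Qed.

Lemma Ncount_add s t u : Ncount T s t + Ncount T t u = Ncount T s u.
Proof. rewrite /Ncount; lia. Qed.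

Lemma lastidx_lt_of i t : T i <= t -> i <= lastidx T t.
Proof. by move=> h; rewrite -(lastidxT i); apply: lastidx_mono. Qed.

Lemma lastidx_lt_of2 i t : t < T i -> lastidx T t < i.
Proof. move=> h; apply: ltTr; exact: le_lt_trans (lastidx_le t) h. Qed.

Lemma firstge_eq t m : T (m - 1) < t <= T m -> firstge T t = m.
Proof.
move=> hm; apply: xget_unique => // j /andP[h1 h2]; move/andP: hm => [h3 h4].
apply: le_anti; apply/andP; split.
- have : T (j - 1) < T m by apply: lt_le_trans h1 h4.
  by move/ltTr; lia.
- have : T (m - 1) < T j by apply: lt_le_trans h3 h2.
  by move/ltTr; lia.
Qed.

End Incr.


Lemma foldr_max_lt {R : realType} (a b : R) l : a < b -> (forall y, y \in l -> y < b) ->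
  foldr Num.max a l < b.
Proof.
move=> ab; elim: l => [|y l IH] h //=.
by rewrite gt_max h ?mem_head // IH // => z zl; apply: h; rewrite inE zl orbT.
Qed.
Lemma foldr_max_ge {R : realType} (a : R) l y : y \in l -> y <= foldr Num.max a l.
Proof.
elim: l => [|x l IH] //=; rewrite inE => /orP[/eqP->|/IH h]; first by rewrite le_max lexx.
by rewrite le_max h orbT.
Qed.
Lemma foldr_max_ge0 {R : realType} (a : R) l : a <= foldr Num.max a l.
Proof. by elim: l => [|x l IH] //=; rewrite le_max IH orbT. Qed.

Lemma le2_map2 {R : realType} {I : Type} (F G : I -> R) l :
  (forall s, F s <= G s) -> le2 (map F l) (map G l).
Proof. by move=> h; elim: l => //= x l ->; rewrite h. Qed.


Lemma maxshift {R : realType} (a b : R) : Num.max a b = a + Num.max (b - a) 0.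
Proof. case: (leP a b) => h; case: (leP (b - a) 0) => h2; lra. Qed.
Lemma maxmax {R : realType} (y A : R) : 0 <= A -> Num.max (Num.max y 0 - A) 0 = Num.max (y - A) 0.
Proof. move=> hA; case: (leP y 0) => h; case: (leP (y - A) 0) => h2; case: (leP (0 - A) 0) => h3 //; lra. Qed.

Lemma count_zero {T : eqType} (p : pred T) (s : seq T) : (forall x, x \in s -> ~~ p x) -> count p s = 0%N.
Proof. by elim: s => //= x s IH h; rewrite (negbTE (h x (mem_head _ _))) IH // => y ys; apply: h; rewrite inE ys orbT. Qed.
Lemma count_all {T : eqType} (p : pred T) (s : seq T) : (forall x, x \in s -> p x) -> count p s = size s.
Proof. by elim: s => //= x s IH h; rewrite h ?mem_head // IH // => y ys; apply: h; rewrite inE ys orbT. Qed.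

Lemma count_down (p : pred nat) M i : (forall x y, (x <= y)%N -> p y -> p x) -> ~~ p i ->
  (count p (iota 0 M) <= i)%N.
Proof.
move=> dn npi; case: (leqP M i) => Mi.
  by apply: leq_trans (count_size _ _) _; rewrite size_iota.
have -> : M = (i + (M - i))%N by lia.
rewrite iotaD count_cat add0n (count_zero (s := iota i _)).
  by rewrite addn0; apply: leq_trans (count_size _ _) _; rewrite size_iota.
move=> x; rewrite mem_iota => /andP[ix _]; apply/negP => px; move/negP: npi; apply.
exact: dn px.
Qed.

Section Model1.
Context {R : realType} {c : nat} (T0 : int -> R) (TS : 'I_c -> int -> R).
Context (hc : (0 < c)%N) (hA : arrivals_ok T0) (hS : servers_ok TS)
  (hN : no_coincidence T0 TS) (hQ : Qv_finite T0 TS).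

Let hT0 : incr_unb T0. Proof. by case: hA. Qed.

Definition nextpts (x : R) : seq R :=
  [seq TS s (lastidx (TS s) x + 1) | s <- enum 'I_c].
Definition nxt (x : R) : R := head 0 (sortR (nextpts x)).
Definition piter (x : R) (l : nat) : R := iter l nxt x.

Lemma NS_add s t u : NS TS s t + NS TS t u = NS TS s u.
Proof. by rewrite /NS -big_split; apply: eq_bigr => i _; apply: Ncount_add. Qed.

Lemma NS_refl t : NS TS t t = 0.
Proof. by rewrite /NS big1 // => i _; rewrite /Ncount subrr. Qed.

Lemma qdiff_add s t u : qdiff T0 TS s t + qdiff T0 TS t u = qdiff T0 TS s u.
Proof.
rewrite /qdiff -(NS_add s t u) -(Ncount_add T0 s t u).
by rewrite opprD addrACA.
Qed.

Lemma NS_ge0 s t : s <= t -> 0 <= NS TS s t.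
Proof. by move=> st; apply: sumr_ge0 => i _; apply: Ncount_ge0 => //; apply: hS. Qed.

Lemma Qv_spec t : (forall s, s <= t -> qdiff T0 TS s t <= Qv T0 TS t) /\
  exists2 s, s <= t & qdiff T0 TS s t = Qv T0 TS t.
Proof.
pose P q := exists2 s, s <= t & q <= qdiff T0 TS s t.
have P0 : P 0 by exists t => //; rewrite /qdiff NS_refl /Ncount !subrr.
have [B hB] := hQ t.
have notP : ~ P (B + 1) by case=> s st; move/(_ s st): hB => h1 h2; have := le_trans h2 h1; lia.
have : forall d : nat, forall q, P q -> ~ P (q + d%:Z) -> exists q, P q /\ ~ P (q + 1).
  elim=> [|d IH] q Pq nP; first by move: nP; rewrite addr0.
  case: (pselect (P (q + 1))) => h; last by exists q.
  by apply: (IH _ h); have -> : q + 1 + d%:Z = q + d.+1%:Z by lia.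
move/(_ (absz (B + 1)) 0 P0); case.
  have -> : 0 + (absz (B + 1))%:Z = B + 1; last by [].
  have : 0 <= B by case: P0 => s st h; apply: le_trans h (hB s st).
  lia.
move=> q [[s st hs] nq].
have hall : forall s', s' <= t -> qdiff T0 TS s' t <= q.
  move=> s' s't; case: (leP (qdiff T0 TS s' t) q) => // h; exfalso; apply: nq.
  by exists s' => //; lia.
have e : qdiff T0 TS s t = q by apply: le_anti; rewrite hs hall.
pose P' := (fun q0 => (forall s, s <= t -> qdiff T0 TS s t <= q0) /\
                         exists2 s, s <= t & qdiff T0 TS s t = q0).
have Pq : P' q by split => //; exists s.
exact: (@xgetI _ 0 P' q Pq).
Qed.

Lemma Qv_ge s t : s <= t -> qdiff T0 TS s t <= Qv T0 TS t.
Proof. by case: (Qv_spec t) => h _; apply: h. Qed.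
Lemma Qv_att t : exists2 s, s <= t & qdiff T0 TS s t = Qv T0 TS t.
Proof. by case: (Qv_spec t). Qed.

Lemma size_nextpts x : size (nextpts x) = c.
Proof. by rewrite size_map size_enum_ord. Qed.

Lemma nextpts_gt x y : y \in nextpts x -> x < y.
Proof. by case/mapP => s _ ->; apply: lastidx_gt; apply: hS. Qed.

Lemma nextpts_SP x y : y \in nextpts x -> isSP TS y.
Proof. by case/mapP => s _ ->; exists s, (lastidx (TS s) x + 1). Qed.

Lemma sortR_nextpts_ne x : sortR (nextpts x) = nxt x :: behead (sortR (nextpts x)).
Proof.
rewrite /nxt; case E: (sortR (nextpts x)) => [|a l] //.
by move: (size_sortR (nextpts x)); rewrite E size_nextpts => h; move: hc; rewrite -h.
Qed.

Lemma nxt_in x : nxt x \in nextpts x.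
Proof. by rewrite -mem_sortR sortR_nextpts_ne mem_head. Qed.

Lemma nxt_le x y : y \in nextpts x -> nxt x <= y.
Proof.
rewrite -mem_sortR; have := sortR_sorted (nextpts x); rewrite sortR_nextpts_ne.
rewrite inE => /(order_path_min (@leR_trans R)) /allP h /orP[/eqP->//|/h //].
Qed.

Lemma nxt_gt x : x < nxt x. Proof. exact: nextpts_gt (nxt_in x). Qed.

Lemma nxt_arg x : exists s, TS s (lastidx (TS s) x + 1) = nxt x.
Proof. by case/mapP: (nxt_in x) => s _ ->; exists s. Qed.

Lemma lastidx_nxt x s0 : TS s0 (lastidx (TS s0) x + 1) = nxt x ->
  forall s, lastidx (TS s) (nxt x) = lastidx (TS s) x + (s == s0)%:R.
Proof.
move=> h0 s; case: (eqVneq s s0) => [->|ne].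
  by rewrite -h0 lastidxT //; apply: hS.
rewrite addr0; apply: lastidx_eq; first exact: hS.
rewrite (le_trans (lastidx_le (hS s) x) (ltW (nxt_gt x))) /=.
have h1 : nxt x <= TS s (lastidx (TS s) x + 1) by apply: nxt_le; apply: map_f; rewrite mem_enum.
rewrite lt_neqAle h1 andbT; apply/eqP => e.
by case: hN => _ /(_ s s0 (lastidx (TS s) x + 1) (lastidx (TS s0) x + 1)); apply => //; [apply/eqP | rewrite h0].
Qed.

Lemma NS_nxt x : NS TS x (nxt x) = 1.
Proof.
have [s0 h0] := nxt_arg x.
rewrite /NS (bigD1 s0) //= big1 => [|i /= ne].
  by rewrite /Ncount (lastidx_nxt h0) eqxx addr0; lia.
by rewrite /Ncount (lastidx_nxt h0) (negbTE ne); lia.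
Qed.

Lemma nxt_first x p : isSP TS p -> x < p -> nxt x <= p.
Proof.
case=> s [m <-] xp; apply: le_trans (_ : TS s (lastidx (TS s) x + 1) <= _).
  by apply: nxt_le; apply: map_f; rewrite mem_enum.
apply: leT; first exact: hS.
have : lastidx (TS s) x < m by apply: lastidx_lt_of2; first exact: hS.
lia.
Qed.

Lemma NS_pos p p' : isSP TS p' -> p < p' -> 1 <= NS TS p p'.
Proof.
case=> s [m e] pp; rewrite /NS (bigD1 s) //=.
have h1 : 1 <= Ncount (TS s) p p'.
  rewrite /Ncount -e lastidxT; last exact: hS.
  have : lastidx (TS s) p < m by apply: lastidx_lt_of2; [exact: hS | rewrite e].
  lia.
apply: le_trans h1 _; rewrite lerDl.
by apply: sumr_ge0 => i _; apply: Ncount_ge0; [apply: hS | apply: ltW].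
Qed.

Lemma piterS x l : piter x l.+1 = nxt (piter x l). Proof. by []. Qed.

Lemma NS_piter x l : NS TS x (piter x l) = l%:Z.
Proof.
elim: l => [|l IH]; first by rewrite /NS /piter /= big1 // => i _; rewrite /Ncount subrr.
by rewrite piterS -(NS_add x (piter x l)) IH NS_nxt; lia.
Qed.

Lemma piter_ge x l : x <= piter x l.
Proof. by elim: l => //= l IH; apply: le_trans IH (ltW (nxt_gt _)). Qed.

Lemma piter_gt x l : (0 < l)%N -> x < piter x l.
Proof. by case: l => //= l _; apply: le_lt_trans (piter_ge x l) (nxt_gt _). Qed.

Lemma piter_SP x l : isSP TS (piter x l.+1).
Proof. exact: nextpts_SP (nxt_in _). Qed.

Lemma SP_unique x q p p' : isSP TS p -> x < p -> NS TS x p = q ->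
  isSP TS p' -> x < p' -> NS TS x p' = q -> p = p'.
Proof.
move=> sp xp e sp' xp' e'.
wlog lt : p p' sp xp e sp' xp' e' / p < p'.
  move=> W; case: (ltgtP p p') => h; [exact: W | symmetry; exact: W | by []].
have := NS_pos sp' lt; rewrite -(NS_add x p p') in e'; lia.
Qed.

Lemma Qv_ge1 i : 1 <= Qv T0 TS (T0 i).
Proof.
pose l := [seq TS s (lastidx (TS s) (T0 i)) | s <- enum 'I_c].
pose sM := foldr Num.max (T0 (i - 1)) l.
have hl : forall y, y \in l -> y < T0 i.
  move=> y /mapP[s _ ->]; rewrite lt_neqAle lastidx_le ?andbT; last exact: hS.
  by apply/eqP => e; case: hN => h _; apply: (h i s (lastidx (TS s) (T0 i))); rewrite e.
have hlt : sM < T0 i by apply: foldr_max_lt => //; apply: ltT => //; lia.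
have hge : forall y, y \in l -> y <= sM by move=> y; apply: foldr_max_ge.
have hge0 : T0 (i - 1) <= sM by apply: foldr_max_ge0.
have e0 : lastidx T0 sM = i - 1 by apply: lastidx_eq => //; rewrite hge0 subrK.
have e1 : forall s, lastidx (TS s) sM = lastidx (TS s) (T0 i).
  move=> s; apply: lastidx_eq; first exact: hS.
  rewrite hge ?(lt_trans hlt) //; first by apply: lastidx_gt; apply: hS.
  by apply: map_f; rewrite mem_enum.
have : qdiff T0 TS sM (T0 i) = 1.
  rewrite /qdiff /Ncount e0 lastidxT // /NS big1 => [|s _]; first lia.
  by rewrite /Ncount e1 subrr.
move=> <-; exact: Qv_ge (ltW hlt).
Qed.

Definition depP (i : int) (p : R) : Prop :=
  isSP TS p /\ T0 i < p /\ NS TS (T0 i) p = Qv T0 TS (T0 i).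

Lemma dep_char i p : isSP TS p -> T0 i < p -> NS TS (T0 i) p = Qv T0 TS (T0 i) ->
  dep T0 TS i = p.
Proof.
move=> h1 h2 h3; apply: xget_unique => [|p' [h1' [h2' h3']]]; first by [].
by apply: (SP_unique h1' h2' h3' h1 h2 h3).
Qed.

Lemma dep_piter i : dep T0 TS i = piter (T0 i) (absz (Qv T0 TS (T0 i))).
Proof.
have q1 := Qv_ge1 i.
have [l el] : exists l, absz (Qv T0 TS (T0 i)) = l.+1 by exists (absz (Qv T0 TS (T0 i))).-1; lia.
rewrite el; apply: dep_char; [exact: piter_SP | exact: piter_gt | ].
rewrite NS_piter -el; lia.
Qed.

Lemma Vc_char i s m : TS s m = dep T0 TS i -> Vc T0 TS i = TS s (m + 1) - TS s m.
Proof.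
move=> h; apply: xget_unique; first by exists s, m.
move=> v [s' [m' [h' ->]]].
have ss : s' = s.
  case: (eqVneq s' s) => // ne; exfalso.
  by case: hN => _ /(_ s' s m' m); apply => //; [apply/eqP | rewrite h h'].
subst s'; have mm : m' = m by apply: (T_inj (hS s)); rewrite h h'.
by subst m'.
Qed.

Lemma Vc_ge0 i : 0 <= Vc T0 TS i.
Proof.
rewrite /Vc; case: xgetP => // v _ [s [m [_ ->]]].
by rewrite subr_ge0 ltW // (ltT (hS s)) //; lia.
Qed.

Lemma Aint_gt0 i : 0 < Aint T0 i.
Proof. by rewrite /Aint subr_gt0 ltT //; lia. Qed.


Lemma perm_nxt x i : dep T0 TS i = nxt x ->
  perm_eq ((nxt x + Vc T0 TS i) :: behead (sortR (nextpts x))) (nextpts (nxt x)).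
Proof.
move=> hd.
have [s0 h0] := nxt_arg x.
have hV : nxt x + Vc T0 TS i = TS s0 (lastidx (TS s0) x + 1 + 1).
  rewrite (@Vc_char i s0 (lastidx (TS s0) x + 1)); last by rewrite h0.
  by rewrite h0 addrC subrK.
pose f s := TS s (lastidx (TS s) x + 1).
pose g s := TS s (lastidx (TS s) (nxt x) + 1).
have gs0 : g s0 = TS s0 (lastidx (TS s0) x + 1 + 1).
  by rewrite /g (lastidx_nxt h0) eqxx.
have gf : {in rem s0 (enum 'I_c), g =1 f}.
  move=> s; rewrite mem_rem_uniq ?enum_uniq // inE => /andP[ne _].
  by rewrite /g (lastidx_nxt h0) (negbTE ne) addr0.
have e1 : nextpts x = map f (enum 'I_c) by [].
have e2 : nextpts (nxt x) = map g (enum 'I_c) by [].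
have p1 : perm_eq (enum 'I_c) (s0 :: rem s0 (enum 'I_c)).
  by apply: perm_to_rem; rewrite mem_enum.
have pB : perm_eq (behead (sortR (nextpts x))) (map f (rem s0 (enum 'I_c))).
  have q1 : perm_eq (nxt x :: behead (sortR (nextpts x))) (map f (enum 'I_c)).
    by rewrite -sortR_nextpts_ne; exact: sortR_perm.
  have q2 : perm_eq (map f (enum 'I_c)) (f s0 :: map f (rem s0 (enum 'I_c))) := perm_map f p1.
  have fs0 : f s0 = nxt x := h0.
  rewrite fs0 in q2; have := perm_trans q1 q2; by rewrite perm_cons.
have em : map g (rem s0 (enum 'I_c)) = map f (rem s0 (enum 'I_c)) by apply/eq_in_map.
rewrite e2 hV -gs0 (permPr (perm_map g p1)) /= perm_cons em.
exact: pB.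
Qed.

Lemma NS_dep i : NS TS (T0 i) (dep T0 TS i) = Qv T0 TS (T0 i).
Proof.
rewrite dep_piter NS_piter.
by have := Qv_ge1 i; lia.
Qed.

Definition pre (m : int) : R := piter (T0 m) (absz (Qv T0 TS (T0 m))).-1.

Lemma dep_pre m : dep T0 TS m = nxt (pre m).
Proof.
rewrite dep_piter /pre.
have := Qv_ge1 m.
by case E: (absz (Qv T0 TS (T0 m))) => [|q] /=; [lia | ].
Qed.

Lemma pre_ge m : T0 m <= pre m. Proof. exact: piter_ge. Qed.

Lemma Wv_repr m : Wv T0 TS m = sortR (map (fun y => y - T0 m) (nextpts (pre m))).
Proof.
set d := dep T0 TS m.
have hd : d = nxt (pre m) by rewrite /d dep_pre.
have eU : Uleftvec TS d = map (fun y => y - d) (nextpts (pre m)).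
  rewrite /Uleftvec /nextpts -[RHS]map_comp; apply: eq_map => s /=.
  congr (_ - _); congr (TS s _); apply: firstge_eq; first exact: hS.
  rewrite addrK; apply/andP; split.
    by apply: le_lt_trans (lastidx_le (hS s) _) _; rewrite hd; apply: nxt_gt.
  by rewrite hd; apply: nxt_le => //; apply: map_f; rewrite mem_enum.
rewrite /Wv eU -/d -sortR_map_mono; last by move=> x y xy; rewrite lerD2l.
congr sortR; rewrite -map_comp; apply: eq_map => y /=; rewrite /D0 -/d; ring.
Qed.

Lemma dep_lt m : dep T0 TS m < dep T0 TS (m + 1).
Proof.
have [s st hs] := Qv_att (T0 m).
have mm : m < m + 1 by lia.
have h1 := Qv_ge (le_trans st (ltW (ltT hT0 mm)) : s <= T0 (m + 1)).
rewrite -(qdiff_add s (T0 m)) hs in h1.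
have hq : qdiff T0 TS (T0 m) (T0 (m + 1)) = 1 - NS TS (T0 m) (T0 (m + 1)).
  by rewrite /qdiff /Ncount !lastidxT //; lia.
rewrite hq in h1.
have e1 := NS_add (T0 m) (T0 (m + 1)) (dep T0 TS (m + 1)).
rewrite NS_dep in e1.
case: (ltP (dep T0 TS m) (dep T0 TS (m + 1))) => // h.
have := NS_add (T0 m) (dep T0 TS (m + 1)) (dep T0 TS m).
rewrite NS_dep -e1 => e2.
have := NS_ge0 h; lia.
Qed.

Lemma pre_dep m : dep T0 TS m <= pre (m + 1).
Proof.
case: (leP (dep T0 TS m) (pre (m + 1))) => // h.
have : nxt (pre (m + 1)) <= dep T0 TS m.
  apply: nxt_first => //; rewrite dep_pre; exact: piter_SP.
rewrite -dep_pre => h2; have := lt_le_trans (dep_lt m) h2; by rewrite ltxx.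
Qed.

Lemma W1 m : le2 (kwstep (Wv T0 TS m) (Vc T0 TS m) (Aint T0 m)) (Wv T0 TS (m + 1)).
Proof.
set f := fun y => y - T0 m.
have ef : Wv T0 TS m = f (nxt (pre m)) :: map f (behead (sortR (nextpts (pre m)))).
  rewrite Wv_repr sortR_map_mono; last by move=> x y xy; rewrite lerD2r.
  by rewrite sortR_nextpts_ne.
rewrite /kwstep ef /=.
set h := fun x => Num.max (x - Aint T0 m) 0.
have -> : f (nxt (pre m)) + Vc T0 TS m = f (nxt (pre m) + Vc T0 TS m).
  by rewrite /f addrAC.
rewrite -map_comp -[_ :: map (h \o f) _]/(map (h \o f) (_ :: _)).
rewrite (sortR_eq (perm_map _ (perm_nxt (dep_pre m)))) Wv_repr.
apply: sort_mono; rewrite /nextpts -!map_comp; apply: le2_map2 => s /=.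
rewrite /h /f /Aint ge_max; apply/andP; split.
- rewrite opprB addrA subrK lerD2r; apply: leT; first exact: hS.
  have : lastidx (TS s) (nxt (pre m)) <= lastidx (TS s) (pre (m + 1)).
    by apply: lastidx_mono; first exact: hS; rewrite -dep_pre pre_dep.
  lia.
- rewrite subr_ge0; apply: ltW; apply: le_lt_trans (pre_ge (m + 1)) _.
  exact: lastidx_gt.
Qed.

Lemma Wv_ge0 m : le2 (nseq c 0) (Wv T0 TS m).
Proof.
rewrite Wv_repr.
have hs : size (map (fun y => y - T0 m) (nextpts (pre m))) = c by rewrite size_map size_nextpts.
rewrite -{1}hs -(sorted_sortR (_ : sorted _ (nseq _ 0))); last first.
  by elim: (size _) => //= -[|n] //= ->; rewrite lexx.
apply: sort_mono; apply: le2_nseq0; apply/allP => y /mapP[z zi ->].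
rewrite subr_ge0; apply: ltW; apply: le_lt_trans (pre_ge m) _; exact: nextpts_gt zi.
Qed.

Lemma W_dom k l : le2 (Witer T0 TS k (nseq c 0) l) (Wv T0 TS (k + l%:Z)).
Proof.
elim: l => [|l IH]; first by rewrite addr0 /=; apply: Wv_ge0.
rewrite /= (_ : k + l.+1%:Z = k + l%:Z + 1); last by lia.
by apply: le2_trans (W1 _); apply: kwstep_mono.
Qed.


Lemma Wt_split k w n m : k <= n -> n <= m ->
  Wt T0 TS k w m = Witer T0 TS n (Wt T0 TS k w n) (absz (m - n)).
Proof.
move=> kn nm; rewrite /Wt.
have -> : absz (m - k) = (absz (n - k) + absz (m - n))%N by lia.
rewrite Witer_add; congr Witer; lia.
Qed.

Lemma Wpart_eq k n m : k <= n -> n <= m ->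
  Wt T0 TS k (Wv T0 TS k) n = Wt T0 TS k (nseq c 0) n ->
  Wt T0 TS k (Wv T0 TS k) m = Wt T0 TS k (nseq c 0) m.
Proof. by move=> kn nm H; rewrite !(Wt_split _ kn nm) H. Qed.

Lemma size_Wv m : size (Wv T0 TS m) = c.
Proof. by rewrite Wv_repr size_sortR size_map size_nextpts. Qed.

Lemma Wpart_const k n m k' : k <= n -> n <= m -> k' <= k ->
  Wt T0 TS k (Wv T0 TS k) n = Wt T0 TS k (nseq c 0) n ->
  Wt T0 TS k' (nseq c 0) m = Wt T0 TS k (nseq c 0) m.
Proof.
move=> kn nm kk H.
have km : k <= m by apply: le_trans nm.
rewrite (Wt_split _ kk km).
set X := Wt T0 TS k' (nseq c 0) k.
have X1 : le2 X (Wv T0 TS k).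
  have := W_dom k' (absz (k - k')); rewrite /X /Wt.
  by have -> : k' + (absz (k - k'))%:Z = k by lia.
have X0 : le2 (nseq c 0) X.
  have sX : size X = c by rewrite /X /Wt size_Witer // size_nseq.
  rewrite -{1}sX; apply: le2_nseq0; apply: Witer_ge0.
  by apply/allP => y; rewrite mem_nseq => /andP[_ /eqP->].
have e := Wpart_eq kn nm H.
apply: le2_anti.
- by rewrite -e /Wt; apply: Witer_mono.
- by rewrite /Wt; apply: Witer_mono.
Qed.

Lemma Wpart k n : k <= n ->
  Wt T0 TS k (Wv T0 TS k) n = Wt T0 TS k (nseq c 0) n ->
  forall m : int, n <= m ->
     Wt T0 TS k (Wv T0 TS k) m = Wt T0 TS k (nseq c 0) m /\
     Wlim_to T0 TS m (Wt T0 TS k (nseq c 0) m).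
Proof.
move=> kn H m nm; split; first exact: (Wpart_eq kn nm H).
move=> eps he; exists k => k' kk _ p _.
by rewrite (Wpart_const kn nm kk H) subrr normr0.
Qed.


Definition Wrel u r j l := map (fun x => Num.max (x - T0 (j + l%:Z)) 0) (Fseq T0 TS u r j l).

Lemma FseqS u r j l : Fseq T0 TS u r j l.+1 =
  sortR ((sigma T0 TS u r j l + Vc T0 TS (j + l%:Z)) :: behead (Fseq T0 TS u r j l)).
Proof. by []. Qed.

Lemma size_Fseq u r j l : (0 < size r)%N -> size (Fseq T0 TS u r j l) = size r.
Proof.
move=> hr; elim: l => [|l IH]; first by rewrite /= size_sortR size_map.
rewrite FseqS size_sortR /=; case E: (Fseq T0 TS u r j l) IH => [|x F] //=.
by move=> e; move: hr; rewrite -e.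
Qed.

Lemma Fseq_ne u r j l : (0 < size r)%N ->
  Fseq T0 TS u r j l = head 0 (Fseq T0 TS u r j l) :: behead (Fseq T0 TS u r j l).
Proof.
move=> hr; have := size_Fseq u j l hr; case: (Fseq T0 TS u r j l) => //= e.
by move: hr; rewrite -e.
Qed.

Lemma Fseq_sorted u r j l : sorted (fun x y : R => x <= y) (Fseq T0 TS u r j l).
Proof. by case: l => [|l]; apply: sortR_sorted. Qed.

Lemma sigma_eq u r j l : u <= T0 (j + l%:Z) -> (0 < size r)%N ->
  sigma T0 TS u r j l = T0 (j + l%:Z) + head 0 (Wrel u r j l).
Proof.
move=> hu hr; rewrite /sigma /Wrel (Fseq_ne u j l hr) /= (max_r hu).
exact: maxshift.
Qed.

Lemma Wrel_step u r j l : u <= T0 (j + l%:Z) -> (0 < size r)%N ->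
  Wrel u r j l.+1 = kwstep (Wrel u r j l) (Vc T0 TS (j + l%:Z)) (Aint T0 (j + l%:Z)).
Proof.
move=> hu hr; rewrite {1}/Wrel FseqS -sortR_map_mono; last exact: max0_homo.
rewrite /kwstep; congr sortR.
have hs := sigma_eq hu hr.
have eT : T0 (j + l.+1%:Z) = T0 (j + l%:Z) + Aint T0 (j + l%:Z).
  rewrite /Aint; have -> : j + l.+1%:Z = j + l%:Z + 1 by lia. ring.
have hA0 : 0 <= Aint T0 (j + l%:Z) by apply: ltW; apply: Aint_gt0.
move: hs; rewrite /Wrel (Fseq_ne u j l hr) /= => hs.
congr (_ :: _).
  by rewrite hs eT; congr (Num.max _ 0); ring.
rewrite -map_comp; apply: eq_map => x /=; rewrite maxmax // eT; congr (Num.max _ 0); ring.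
Qed.

Lemma Wrel_Witer u r j a n : j + a%:Z = n -> u <= T0 n -> (0 < size r)%N ->
  forall i, Wrel u r j (a + i) = Witer T0 TS n (Wrel u r j a) i.
Proof.
move=> ja un hr; elim=> [|i IH]; first by rewrite addn0.
rewrite addnS Wrel_step //.
- rewrite IH /=; congr kwstep; congr (_ _); rewrite -ja; lia.
- apply: le_trans un _; apply: leT => //; lia.
Qed.

Lemma sigma_ge u r j l : T0 (j + l%:Z) <= sigma T0 TS u r j l.
Proof. by rewrite /sigma le_max le_max lexx orbT. Qed.

Lemma sigma_mono1 u r j l : (0 < size r)%N -> sigma T0 TS u r j l <= sigma T0 TS u r j l.+1.
Proof.
move=> hr; set sg := sigma T0 TS u r j l.
have hF := Fseq_ne u j l hr.
rewrite {1}/sg /sigma ge_max ge_max; apply/andP; split; [apply/andP; split|].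
- by rewrite le_max le_max lexx.
- rewrite le_max le_max; apply/orP; left; apply/orP; right; apply: ltW; apply: ltT => //; lia.
- rewrite le_max; apply/orP; right.
  have hsz : (0 < size (Fseq T0 TS u r j l.+1))%N by rewrite size_Fseq.
  have hin : head 0 (Fseq T0 TS u r j l.+1) \in Fseq T0 TS u r j l.+1.
    by case: (Fseq T0 TS u r j l.+1) hsz => //= x F _; rewrite mem_head.
  move: hin; rewrite FseqS mem_sortR inE => /orP[/eqP->|hin].
    apply: le_trans (_ : sg <= _); first by rewrite /sg /sigma le_max lexx orbT.
    by rewrite lerDl; apply: Vc_ge0.
  have := Fseq_sorted u r j l; rewrite hF /= => /(order_path_min (@leR_trans R)) /allP.
  by apply.
Qed.

Lemma sigma_mono u r j l l' : (0 < size r)%N -> (l <= l')%N ->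
  sigma T0 TS u r j l <= sigma T0 TS u r j l'.
Proof.
move=> hr /subnK <-; elim: (l' - l)%N => [|d IH] //.
by rewrite addSn; apply: le_trans IH (sigma_mono1 _ _ _ hr).
Qed.


Lemma res_base u r j l (t : R) : T0 (j + l%:Z) <= t ->
  map (fun x => Num.max (x - t) 0) (Fseq T0 TS u r j l) =
  map (fun w => Num.max (w - (t - T0 (j + l%:Z))) 0) (Wrel u r j l).
Proof.
move=> ht; rewrite /Wrel -map_comp; apply: eq_map => x /=.
rewrite maxmax ?subr_ge0 //; congr (Num.max _ 0); ring.
Qed.

Lemma res_step u r j l (t : R) : (0 < size r)%N -> sigma T0 TS u r j l <= t ->
  sortR (map (fun x => Num.max (x - t) 0) (Fseq T0 TS u r j l.+1)) =
  sortR (Num.max (sigma T0 TS u r j l + Vc T0 TS (j + l%:Z) - t) 0 ::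
    map (fun w => Num.max (w - (t - T0 (j + l%:Z))) 0) (behead (Wrel u r j l))).
Proof.
move=> hr hs; rewrite FseqS (sortR_eq (perm_map _ (sortR_perm _))) /=.
congr sortR; congr (_ :: _); rewrite /Wrel behead_map -map_comp; apply: eq_map => x /=.
rewrite maxmax; last by rewrite subr_ge0; apply: le_trans (sigma_ge _ _ _ _) hs.
congr (Num.max _ 0); ring.
Qed.

Lemma Zstate_eq1 uA rA jA eA a uB rB jB eB b n (t : R) :
  jA + a%:Z = n -> jB + b%:Z = n -> uA <= T0 n -> uB <= T0 n ->
  (0 < size rA)%N -> (0 < size rB)%N ->
  Wrel uA rA jA a = Wrel uB rB jB b -> T0 n + head 0 (Wrel uA rA jA a) <= t ->
  (Zstate T0 TS uA rA jA eA t).1 = (Zstate T0 TS uB rB jB eB t).1.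
Proof.
move=> ja jb ua ub ra rb eW ht.
set W0 := Wrel uA rA jA a.
have eWA := Wrel_Witer ja ua ra.
have eWB : forall i, Wrel uB rB jB (b + i) = Witer T0 TS n W0 i.
  by move=> i; rewrite (Wrel_Witer jb ub rb) -eW.
have uAi : forall i, uA <= T0 (jA + (a + i)%:Z).
  by move=> i; apply: le_trans ua _; apply: leT => //; lia.
have uBi : forall i, uB <= T0 (jB + (b + i)%:Z).
  by move=> i; apply: le_trans ub _; apply: leT => //; lia.
have sAB : forall i, sigma T0 TS uA rA jA (a + i) = sigma T0 TS uB rB jB (b + i).
  move=> i; rewrite !sigma_eq // eWA eWB; congr (T0 _ + _); lia.
have sAt : sigma T0 TS uA rA jA a <= t.
  by rewrite sigma_eq; [rewrite ja | rewrite ja | ].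
have tn : T0 n <= t by apply: le_trans sAt; rewrite -ja; apply: sigma_ge.
have ln : n <= lastidx T0 t by apply: lastidx_lt_of.
set M := absz (lastidx T0 t - n + 1).
have NA : Nent T0 uA jA t = (a + M)%N.
  rewrite /Nent ltNge (le_trans ua tn) /=.
  have h : 0 <= lastidx T0 t - jA + 1 by lia.
  rewrite (max_r h) /M; lia.
have NB : Nent T0 uB jB t = (b + M)%N.
  rewrite /Nent ltNge (le_trans ub tn) /=.
  have h : 0 <= lastidx T0 t - jB + 1 by lia.
  rewrite (max_r h) /M; lia.
have cw : forall (a0 : nat) (P : pred nat), count P (iota 0 (a0 + M)) =
    (count P (iota 0 a0) + count (fun i => P (a0 + i)%N) (iota 0 M))%N.
  move=> a0 P; rewrite iotaD count_cat add0n.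
  have -> : iota a0 M = map (addn a0) (iota 0 M) by rewrite -iotaDl addn0.
  by rewrite count_map.
rewrite /Zstate /= NA NB !cw.
have z1 : count (fun l => t < sigma T0 TS uA rA jA l) (iota 0 a) = 0%N.
  apply: count_zero => x; rewrite mem_iota /= -leNgt => xa.
  apply: le_trans sAt; apply: sigma_mono => //; lia.
have z2 : count (fun l => t < sigma T0 TS uB rB jB l) (iota 0 b) = 0%N.
  apply: count_zero => x; rewrite mem_iota /= -leNgt => xa.
  apply: le_trans (_ : sigma T0 TS uB rB jB (b + 0) <= t).
    by apply: sigma_mono => //; lia.
  by rewrite -sAB addn0.
have a1 : count (fun l => sigma T0 TS uA rA jA l <= t) (iota 0 a) = a.
  rewrite count_all ?size_iota // => x; rewrite mem_iota /= => xa.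
  apply: le_trans sAt; apply: sigma_mono => //; lia.
have a2 : count (fun l => sigma T0 TS uB rB jB l <= t) (iota 0 b) = b.
  rewrite count_all ?size_iota // => x; rewrite mem_iota /= => xa.
  apply: le_trans (_ : sigma T0 TS uB rB jB (b + 0) <= t).
    by apply: sigma_mono => //; lia.
  by rewrite -sAB addn0.
rewrite z1 z2 a1 a2 !add0n.
have ec1 : count (fun i => t < sigma T0 TS uA rA jA (a + i)) (iota 0 M) =
           count (fun i => t < sigma T0 TS uB rB jB (b + i)) (iota 0 M).
  by apply: eq_count => i; rewrite /= sAB.
have ec2 : count (fun i => sigma T0 TS uA rA jA (a + i) <= t) (iota 0 M) =
           count (fun i => sigma T0 TS uB rB jB (b + i) <= t) (iota 0 M).
  by apply: eq_count => i; rewrite /= sAB.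
rewrite ec1 -ec2; congr pair.
set ns := count _ (iota 0 M).
case E: ns => [|i].
  rewrite !addn0 !res_base; first by rewrite ja jb eW.
  - by rewrite jb.
  - by rewrite ja.
have hi : sigma T0 TS uA rA jA (a + i) <= t.
  case: (leP (sigma T0 TS uA rA jA (a + i)) t) => // h.
  have : (ns <= i)%N.
    apply: count_down; last by rewrite /= -ltNge.
    move=> x y xy /= hy; apply: le_trans hy; apply: sigma_mono => //; lia.
  by rewrite E ltnn.
rewrite !addnS !res_step //; last by rewrite -sAB.
rewrite sAB eWA eWB.
have -> : jA + (a + i)%:Z = jB + (b + i)%:Z by lia.
by [].
Qed.


Lemma sorted_nseq (y : R) m : sorted (fun x y : R => x <= y) (nseq m y).
Proof. by elim: m => //= -[|m] //= ->; rewrite lexx. Qed.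

Lemma Wrel0_nseq u j : u <= T0 j -> Wrel u (nseq c 0) j 0 = nseq c 0.
Proof.
move=> hu; rewrite /Wrel /= map_nseq sorted_sortR ?sorted_nseq // map_nseq addr0 addr0.
by rewrite max_r // subr_le0.
Qed.

Lemma queue_dep k l : (l <= (absz (Qv T0 TS (T0 k))).-1)%N ->
  dep T0 TS (k - Qv T0 TS (T0 k) + 1 + l%:Z) = piter (T0 k) l.+1.
Proof.
set Q := Qv T0 TS (T0 k); move=> hl.
have Q1 : 1 <= Q := Qv_ge1 k.
set i := k - Q + 1 + l%:Z.
have ik : i <= k by rewrite /i; lia.
have Tik : T0 i <= T0 k by apply: leT.
apply: dep_char; [exact: piter_SP | by apply: le_lt_trans Tik (piter_gt _ _) |].
rewrite -(NS_add (T0 i) (T0 k)) NS_piter.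
set N := NS TS (T0 i) (T0 k).
have hq : forall s, qdiff T0 TS s (T0 k) = qdiff T0 TS s (T0 i) + (k - i - N).
  by move=> s; rewrite -(qdiff_add s (T0 i)) /qdiff /Ncount !lastidxT.
apply: le_anti; apply/andP; split.
- have [s2 s2k hs2] := Qv_att (T0 k).
  case: (leP s2 (T0 i)) => h.
    have := Qv_ge h; rewrite -/Q in hs2; have := hq s2; rewrite hs2 => e; lia.
  exfalso.
  have h1 : i <= lastidx T0 s2 by apply: lastidx_lt_of => //; apply: ltW.
  have h2 := NS_ge0 s2k.
  move: hs2; rewrite /qdiff /Ncount lastidxT // -/Q => e; lia.
- have [s1 s1i hs1] := Qv_att (T0 i).
  have := Qv_ge (le_trans s1i Tik); rewrite hq hs1 -/Q; lia.
Qed.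

Lemma Uvec_nextpts t : Uvec TS t = map (fun y => y - t) (nextpts t).
Proof. by rewrite /Uvec /nextpts -[RHS]map_comp. Qed.

Lemma Fseq_vac k l : (l <= (absz (Qv T0 TS (T0 k))).-1)%N ->
  Fseq T0 TS (T0 k) (sortR (Uvec TS (T0 k))) (k - Qv T0 TS (T0 k) + 1) l =
  sortR (nextpts (piter (T0 k) l)).
Proof.
have Q1 := Qv_ge1 k.
elim: l => [|l IH] hl.
  rewrite /= (sortR_eq (perm_map _ (sortR_perm _))) Uvec_nextpts -map_comp.
  congr sortR; rewrite -[RHS]map_id; apply: eq_map => y /=; ring.
rewrite FseqS /sigma IH; last by lia.
have hd : dep T0 TS (k - Qv T0 TS (T0 k) + 1 + l%:Z) = nxt (piter (T0 k) l).
  by apply: queue_dep; lia.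
have hu : Num.max (T0 k) (T0 (k - Qv T0 TS (T0 k) + 1 + l%:Z)) = T0 k.
  by apply: max_l; apply: leT => //; lia.
rewrite hu max_r; last first.
  by apply: ltW; apply: le_lt_trans (piter_ge _ l) (nxt_gt _).
apply: sortR_eq; exact: (perm_nxt hd).
Qed.

Lemma Wrel_vac k :
  Wrel (T0 k) (sortR (Uvec TS (T0 k))) (k - Qv T0 TS (T0 k) + 1) (absz (Qv T0 TS (T0 k))).-1
  = Wv T0 TS k.
Proof.
have Q1 := Qv_ge1 k.
rewrite /Wrel Fseq_vac // Wv_repr /pre.
have -> : k - Qv T0 TS (T0 k) + 1 + ((absz (Qv T0 TS (T0 k))).-1)%:Z = k by lia.
rewrite -sortR_map_mono; last exact: max0_homo.
congr sortR; apply/eq_in_map => y hy; apply: max_l.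
rewrite subr_ge0; apply: ltW; apply: le_lt_trans (piter_ge _ _) (nextpts_gt hy).
Qed.

Lemma size_Uvec t : size (sortR (Uvec TS t)) = c.
Proof. by rewrite size_sortR Uvec_nextpts size_map size_nextpts. Qed.

Lemma Zpair_eq (z1 z2 : nat * seq R * R) : z1.1 = z2.1 -> z1.2 = z2.2 -> z1 = z2.
Proof. by case: z1 z2 => [x1 y1] [x2 y2] /= -> ->. Qed.

Lemma Zpart k n : k <= n ->
  Wt T0 TS k (Wv T0 TS k) n = Wt T0 TS k (nseq c 0) n ->
  forall t : R, T0 n + head 0 (Wt T0 TS k (Wv T0 TS k) n) <= t ->
     Zstate T0 TS (T0 k) (sortR (Uvec TS (T0 k))) (k - Qv T0 TS (T0 k) + 1) 0 t
       = Zstate T0 TS (T0 k) (nseq c 0) k 0 t /\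
     Z_to T0 TS t (Zstate T0 TS (T0 k) (nseq c 0) k 0 t).
Proof.
move=> kn H t ht.
have Q1 := Qv_ge1 k.
have Tkn : T0 k <= T0 n by apply: leT.
have hc' : (0 < size (nseq c (0%R : R)))%N by rewrite size_nseq.
have hU : (0 < size (sortR (Uvec TS (T0 k))))%N by rewrite size_Uvec.
have WB : Wrel (T0 k) (nseq c 0) k (absz (n - k)) = Wt T0 TS k (nseq c 0) n.
  have j0 : k + (0%N)%:Z = k by rewrite addr0.
  have := @Wrel_Witer (T0 k) (nseq c 0) k 0 k j0 (lexx _) hc' (absz (n - k)).
  by rewrite add0n Wrel0_nseq.
set Q := Qv T0 TS (T0 k).
have jk : k - Q + 1 + ((absz Q).-1)%:Z = k by lia.
have eA := @Wrel_Witer (T0 k) (sortR (Uvec TS (T0 k))) (k - Q + 1) (absz Q).-1 k jk (lexx _) hU (absz (n - k)).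
rewrite Wrel_vac in eA.
have j1 : k - Q + 1 + (((absz Q).-1 + absz (n - k))%N)%:Z = n by lia.
have j2 : k + (absz (n - k))%:Z = n by lia.
have WAB : Wrel (T0 k) (sortR (Uvec TS (T0 k))) (k - Q + 1) ((absz Q).-1 + absz (n - k))%N =
           Wrel (T0 k) (nseq c 0) k (absz (n - k)).
  by rewrite eA WB -H.
have ht' : T0 n + head 0 (Wrel (T0 k) (sortR (Uvec TS (T0 k))) (k - Q + 1) ((absz Q).-1 + absz (n - k))%N) <= t.
  by rewrite eA.
split.
  apply: Zpair_eq; last by [].
  exact: (@Zstate_eq1 (T0 k) (sortR (Uvec TS (T0 k))) (k - Q + 1) 0 ((absz Q).-1 + absz (n - k))%N
     (T0 k) (nseq c 0) k 0 (absz (n - k)) n t j1 j2 Tkn Tkn hU hc' WAB ht').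
pose U0 := T0 k - 1.
have key : forall u, u <= U0 -> Zemp T0 TS u t = Zstate T0 TS (T0 k) (nseq c 0) k 0 t.
  move=> u hu.
  have uk : u < T0 k by rewrite /U0 in hu; lra.
  set k' := lastidx T0 u + 1.
  have k'k : k' <= k by rewrite /k'; have := lastidx_lt_of2 hT0 uk; lia.
  have uk' : u <= T0 k' by apply: ltW; apply: lastidx_gt.
  have WC : Wrel u (nseq c 0) k' (absz (n - k')) = Wt T0 TS k' (nseq c 0) n.
    have j0 : k' + (0%N)%:Z = k' by rewrite addr0.
    have := @Wrel_Witer u (nseq c 0) k' 0 k' j0 uk' hc' (absz (n - k')).
    by rewrite add0n Wrel0_nseq.
  have hWC : Wrel u (nseq c 0) k' (absz (n - k')) = Wrel (T0 k) (nseq c 0) k (absz (n - k)).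
    by rewrite WC WB (Wpart_const kn (lexx n) k'k H).
  apply: Zpair_eq.
    have j3 : k' + (absz (n - k'))%:Z = n by lia.
    have un : u <= T0 n by exact: ltW (lt_le_trans uk Tkn).
    have ht2 : T0 n + head 0 (Wrel u (nseq c 0) k' (absz (n - k'))) <= t by rewrite hWC WB -H.
    exact: (@Zstate_eq1 u (nseq c 0) k' _ (absz (n - k')) (T0 k) (nseq c 0) k 0 (absz (n - k)) n t
      j3 j2 un Tkn hc' hc' hWC ht2).
  have ln : n <= lastidx T0 t.
    apply: lastidx_lt_of => //; apply: le_trans ht; rewrite lerDl.
    rewrite H /Wt.
    have a0 : all (fun x : R => 0 <= x) (nseq c 0).
      by apply/allP => y; rewrite mem_nseq => /andP[_ /eqP->].
    have := @Witer_ge0 _ _ T0 TS k (nseq c 0) (absz (n - k)) a0.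
    by case: (Witer T0 TS k (nseq c 0) (absz (n - k))) => [|x l] /=; [rewrite lexx | case/andP].
  have hk : T0 k <= T0 (lastidx T0 t) by apply: leT => //; lia.
  rewrite /Zemp /Zstate /= -/k'.
  have -> : u < T0 (lastidx T0 t) by apply: lt_le_trans uk hk.
  case: (ltP (T0 k) (T0 (lastidx T0 t))) => // h.
  have e : T0 (lastidx T0 t) = T0 k by apply: le_anti; rewrite h hk.
  by rewrite e add0r.
split.
  by exists U0 => u hu; rewrite key.
move=> eps he; exists U0 => u hu; rewrite (key u hu).
set z := Zstate T0 TS (T0 k) (nseq c 0) k 0 t.
rewrite subrr normr0 he; split => // p _.
by rewrite subrr normr0.
Qed.

End Model1.

Theorem proposition2 (R : realType) (c : nat) (T0 : int -> R)
    (TS : 'I_c -> int -> R) (k n : int) :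
  (0 < c)%N ->
  arrivals_ok T0 -> servers_ok TS -> no_coincidence T0 TS -> Qv_finite T0 TS ->
  k <= -1 -> k <= n -> n <= -1 ->
  Wt T0 TS k (Wv T0 TS k) n = Wt T0 TS k (nseq c 0) n ->
  (forall m : int, n <= m ->
     Wt T0 TS k (Wv T0 TS k) m = Wt T0 TS k (nseq c 0) m /\
     Wlim_to T0 TS m (Wt T0 TS k (nseq c 0) m)) /\
  (forall t : R, T0 n + head 0 (Wt T0 TS k (Wv T0 TS k) n) <= t ->
     Zstate T0 TS (T0 k) (sortR (Uvec TS (T0 k))) (k - Qv T0 TS (T0 k) + 1) 0 t
       = Zstate T0 TS (T0 k) (nseq c 0) k 0 t /\
     Z_to T0 TS t (Zstate T0 TS (T0 k) (nseq c 0) k 0 t)).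
Proof.
move=> hc hA hS hN hQ hk kn hn H; split.
- exact: (Wpart hc hA hS hN hQ kn H).
- exact: (Zpart hc hA hS hN hQ kn H).
Qed.
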